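(* Let $G$ be a complete convex geometric graph and let $B$ be a blocker for $\mathcal{T}_{\leq 3}(G)$ that is not a star. Suppose $B$ is a caterpillar with a spine whose terminal edges $[a,a']$ and $[b',b]$ lie on the boundary of $\mathrm{conv}(G)$, where $a$ and $b$ are the endpoints of the spine (leaves of $B$) and $a'\neq b'$. Let $\alpha$ be the closed arc of the boundary of $\mathrm{conv}(G)$ with endpoints $a,b$ that contains $a'$ and $b'$, and let $\beta$ be the other closed arc with endpoints $a,b$. Then every leaf of $B$ lies on $\beta$.
   Context: A geometric graph is a graph whose vertices are points in the plane in general position (no three collinear) and whose edges are straight segments between pairs of vertices; $G$ is complete if all pairs of vertices are joined, and convex if its vertices are in convex position. $\mathrm{conv}(G)$ is the convex hull of $V(G)$. $\mathcal{T}_{\leq k}(G)$ denotes the family of all simple (non-crossing) spanning trees of $G$ of (graph) diameter at most $k$. A subgraph $B$ blocks a family $\mathcal{F}$ of subgraphs if it shares at least one edge with every member of $\mathcal{F}$; a blocker of $\mathcal{F}$ is a subgraph that blocks $\mathcal{F}$ and has the smallest possible number of edges among all subgraphs blocking $\mathcal{F}$. A star of $G$ is the set of all edges of $G$ emanating from a single vertex. A tree is a caterpillar if deleting all its leaves and their incident edges leaves a path (or empty graph); a spine is a longest path in the caterpillar. *)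

(* Defs.v *)
(* Combinatorial model of a complete convex geometric graph:
   the n vertices are 'I_n, listed in (counterclockwise) order along the
   boundary of the convex hull.  Two segments between points in convex
   position cross iff their endpoints interleave in this cyclic order. *)
From mathcomp Require Import all_boot.
Set Implicit Arguments. Unset Strict Implicit. Unset Printing Implicit Defensive.

Section ConvexGeomGraph.
Variable n : nat.
Local Notation V := 'I_n.
Local Notation edge_t := {set V}.
Local Notation graph_t := {set {set V}}.

Definition is_edge (e : edge_t) : bool := #|e| == 2.

Definition subgraph (B : graph_t) : bool := [forall e in B, is_edge e].

Definition adj (B : graph_t) : rel V := fun x y => (x != y) && ([set x; y] \in B).

Definition verts (B : graph_t) : {set V} := [set x | [exists y, adj B x y]].

Definition deg (B : graph_t) (x : V) : nat := #|[set y | adj B x y]|.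
Definition leaf (B : graph_t) (x : V) : bool := deg B x == 1.

Definition cross (e f : edge_t) : bool :=
  [exists a : V, exists b : V, exists c : V, exists d : V,
     [&& e == [set a; b], f == [set c; d], (a < c < b)%N & ((d < a) || (b < d))%N]].

Definition noncrossing (T : graph_t) : bool :=
  [forall e in T, forall f in T, ~~ cross e f].

Definition spanning_tree (T : graph_t) : Prop :=
  [/\ subgraph T, (forall x y : V, connect (adj T) x y) & #|T| = n.-1].

Definition diam_le (T : graph_t) (k : nat) : Prop :=
  forall x y : V, exists p : seq V,
    [/\ (size p <= k)%N, path (adj T) x p & last x p = y].

Definition in_T3 (T : graph_t) : Prop :=
  [/\ spanning_tree T, noncrossing T & diam_le T 3].

Definition blocks (B : graph_t) : Prop :=
  forall T : graph_t, in_T3 T -> exists e, e \in B /\ e \in T.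

Definition blocker (B : graph_t) : Prop :=
  [/\ subgraph B, blocks B &
      forall B' : graph_t, subgraph B' -> blocks B' -> (#|B| <= #|B'|)%N].

Definition star (v : V) : graph_t := [set e | is_edge e && (v \in e)].
Definition is_star (B : graph_t) : Prop := exists v, B = star v.

Definition tree_on (B : graph_t) : Prop :=
  [/\ subgraph B,
      (forall x y, x \in verts B -> y \in verts B -> connect (adj B) x y) &
      #|B| = #|verts B| - 1].

Definition induced_path (B : graph_t) (S : {set V}) : Prop :=
  exists s : seq V, [/\ uniq s, [set x in s] = S &
    forall x y, x \in S -> y \in S ->
      (adj B x y <-> ((x, y) \in zip s (behead s)) || ((y, x) \in zip s (behead s)))].

Definition internal (B : graph_t) : {set V} := [set x in verts B | (2 <= deg B x)%N].

Definition caterpillar (B : graph_t) : Prop :=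
  tree_on B /\ induced_path B (internal B).

Definition bpath (B : graph_t) (p : seq V) : bool :=
  if p is x :: q then uniq p && path (adj B) x q else false.

Definition spine (B : graph_t) (s : seq V) : Prop :=
  bpath B s /\ forall p, bpath B p -> (size p <= size s)%N.

(* counterclockwise distance along the hull from x to y *)
Definition cdist (x y : V) : nat := (y + n - x) %% n.

Definition on_boundary (x y : V) : bool := (cdist x y == 1) || (cdist y x == 1).

(* closed boundary arc going counterclockwise from x to y *)
Definition hull_arc (x y : V) : {set V} := [set z | (cdist x z <= cdist x y)%N].

End ConvexGeomGraph.

(* Main.v *)
Require Import Defs.
From mathcomp Require Import all_boot zify.
Set Implicit Arguments. Unset Strict Implicit. Unset Printing Implicit Defensive.

Lemma cdistE n (x y : 'I_n) : cdist x y = if x <= y then y - x else y + n - x.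
Proof.
rewrite /cdist. have := ltn_ord x; have := ltn_ord y => hy hx.
case: leqP => h.
  rewrite -addnBAC // modnDr modn_small //; lia.
rewrite modn_small; lia.
Qed.

Lemma arc_nc_nat n a0 l h p1 p2 q1 q2 : a0 < n -> p1 < n -> p2 < n -> q1 < n -> q2 < n ->
  l < (if a0 <= p1 then p1 - a0 else p1 + n - a0) < h ->
  l < (if a0 <= p2 then p2 - a0 else p2 + n - a0) < h ->
  ~~ (l < (if a0 <= q1 then q1 - a0 else q1 + n - a0) < h) ->
  ~~ (l < (if a0 <= q2 then q2 - a0 else q2 + n - a0) < h) ->
  ~~ ((p1 < q1 < p2) && ((q2 < p1) || (p2 < q2))) &&
  ~~ ((q1 < p1 < q2) && ((p2 < q1) || (q2 < p2))).
Proof.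
move=> ? ? ? ? ?; do 4 (case: ifP => ? ?); lia.
Qed.

Lemma set2_eq (T : finType) (u v a b : T) : [set u; v] = [set a; b] ->
  (a = u /\ b = v) \/ (a = v /\ b = u).
Proof.
move=> E.
have ha : a \in [set u; v] by rewrite E set21.
have hb : b \in [set u; v] by rewrite E set22.
have hu : u \in [set a; b] by rewrite -E set21.
have hv : v \in [set a; b] by rewrite -E set22.
move: ha hb hu hv; rewrite !inE.
move=> /orP[/eqP->|/eqP->] /orP[/eqP->|/eqP->] //=; rewrite ?orbb;
 try by [left|right].
- by move=> _ /eqP ->; left.
- by move=> /eqP -> _; right.
Qed.

Lemma adj_sym n (B : {set {set 'I_n}}) u v : adj B u v = adj B v u.
Proof. by rewrite /adj eq_sym setUC. Qed.

Lemma cross_disj n (e f : {set 'I_n}) z : cross e f -> z \in e -> z \in f -> False.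
Proof.
move=> /existsP[a /existsP[b /existsP[c /existsP[d /and4P[/eqP he /eqP hf h1 h2]]]]].
rewrite he hf !inE => /orP[/eqP->|/eqP->] /orP[/eqP e1|/eqP e1]; subst; lia.
Qed.

Lemma diam3 n (T : {set {set 'I_n}}) (x u w y : 'I_n) :
  (x = u \/ adj T x u) -> (u = w \/ adj T u w) -> (w = y \/ adj T w y) ->
  exists p : seq 'I_n, [/\ (size p <= 3)%N, path (adj T) x p & last x p = y].
Proof.
move=> [<-|h1] [<-|h2] [<-|h3].
- by exists [::].
- by exists [:: y]; rewrite /= h3.
- by exists [:: w]; rewrite /= h2.
- by exists [:: w; y]; rewrite /= h2 h3.
- by exists [:: u]; rewrite /= h1.
- by exists [:: u; y]; rewrite /= h1 h3.
- by exists [:: u; w]; rewrite /= h1 h2.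
- by exists [:: u; w; y]; rewrite /= h1 h2 h3.
Qed.

Definition dstar n (c x : 'I_n) (P : {set 'I_n}) : {set {set 'I_n}} :=
  [set (if w \in P then [set x; w] else [set c; w]) | w in [set~ c]].

Lemma dstar_T3 n (c x : 'I_n) (P : {set 'I_n}) : c != x -> c \notin P -> x \notin P ->
  (forall w1 w2, w1 \in P -> w2 \notin P -> w2 != c -> w2 != x ->
     ~~ cross [set x; w1] [set c; w2] && ~~ cross [set c; w2] [set x; w1]) ->
  in_T3 (dstar c x P).
Proof.
move=> ncx cP xP Hnc.
set T := dstar c x P.
have memT w : w != c -> (if w \in P then [set x; w] else [set c; w]) \in T.
  by move=> hw; apply: imset_f; rewrite !inE.
have hub u : u = (if u \in P then x else c) \/ adj T u (if u \in P then x else c).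
  case: ifP => uP.
    right; rewrite /adj; have ux : u != x by apply: contraTneq uP => ->.
    have uc : u != c by apply: contraTneq uP => ->.
    by rewrite ux setUC; have := memT u uc; rewrite uP.
  case: (eqVneq u c) => [->|uc]; first by left.
  by right; rewrite /adj uc setUC; have := memT u uc; rewrite uP.
have axc : adj T x c.
  have xc : x != c by rewrite eq_sym.
  by rewrite /adj xc setUC; have := memT x xc; rewrite (negbTE xP).
have hubs u w : (if u \in P then x else c) = (if w \in P then x else c) \/
   adj T (if u \in P then x else c) (if w \in P then x else c).
  case: ifP; case: ifP => _ _; try by left.
  - by right.
  - by right; rewrite adj_sym.
have diam : diam_le T 3.
  move=> u w; apply: (diam3 (hub u) (hubs u w)).
  case: (hub w) => [<-|h]; first by left.
  by right; rewrite adj_sym.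
have nc : noncrossing T.
  apply/forall_inP => e /imsetP[w1]; rewrite !inE => w1c ->.
  apply/forall_inP => f /imsetP[w2]; rewrite !inE => w2c ->.
  case: ifP => p1; case: ifP => p2.
  + by apply/negP => /cross_disj; apply; [exact: set21 | exact: set21].
  + case: (eqVneq w2 x) => [->|w2x].
      by apply/negP => /cross_disj; apply; [exact: set21 | exact: set22].
    by case/andP: (Hnc w1 w2 p1 (negbT p2) w2c w2x).
  + case: (eqVneq w1 x) => [->|w1x].
      by apply/negP => /cross_disj; apply; [exact: set22 | exact: set21].
    by case/andP: (Hnc w2 w1 p2 (negbT p1) w1c w1x).
  + by apply/negP => /cross_disj; apply; [exact: set21 | exact: set21].
split => //; split.
- apply/forall_inP => e /imsetP[w]; rewrite !inE => wc ->.
  rewrite /is_edge; case: ifP => wP; rewrite cards2.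
    by have -> : x != w by apply: contraTneq wP => <-.
  by rewrite [c == w]eq_sym wc.
- move=> u w; have [p [_ hp hl]] := diam u w.
  by apply/connectP; exists p.
- rewrite card_in_imset ?cardsC1 ?card_ord ?subn1 //.
  move=> w1 w2; rewrite !inE => h1 h2.
  case: ifP => p1; case: ifP => p2 /set2_eq.
  + case=> [[_ ->] //|[e _]]; by move: p1; rewrite -e (negbTE xP).
  + case=> [[e _]|[e _]]; first by rewrite e eqxx in ncx.
    by move: p1; rewrite -e (negbTE cP).
  + case=> [[e _]|[_ e]]; first by rewrite e eqxx in ncx.
    by rewrite e eqxx in h2.
  + case=> [[_ ->] //|[_ e]]; by rewrite e eqxx in h2.
Qed.

Lemma arc_T3 n (a0 c x : 'I_n) l h : l < cdist a0 x < h -> ~~ (l < cdist a0 c < h) ->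
  in_T3 (dstar c x ([set w | l < cdist a0 w < h] :\ x)).
Proof.
move=> hx hc; apply: dstar_T3.
- by apply: contraNneq hc => ->.
- by rewrite !inE negb_and hc orbT.
- by rewrite !inE eqxx.
move=> w1 w2; rewrite !inE => /andP[w1x hw1] /nandP hw2 w2c w2x.
have {}hw2 : ~~ (l < cdist a0 w2 < h) by case: hw2 => //; rewrite w2x.
have key : forall p1 p2 q1 q2 : 'I_n, l < cdist a0 p1 < h -> l < cdist a0 p2 < h ->
    ~~ (l < cdist a0 q1 < h) -> ~~ (l < cdist a0 q2 < h) ->
    ~~ ((p1 < q1 < p2) && ((q2 < p1) || (p2 < q2))) &&
    ~~ ((q1 < p1 < q2) && ((p2 < q1) || (q2 < p2))).
  by move=> p1 p2 q1 q2; rewrite !cdistE; apply: arc_nc_nat.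
have k1 := key x w1 c w2 hx hw1 hc hw2; have k2 := key x w1 w2 c hx hw1 hw2 hc.
have k3 := key w1 x c w2 hw1 hx hc hw2; have k4 := key w1 x w2 c hw1 hx hw2 hc.
apply/andP; split; apply/negP;
move=> /existsP[a /existsP[b /existsP[c' /existsP[d /and4P[/eqP he /eqP hf h1 h2]]]]];
  move: h1 h2; case: (set2_eq he) => [[-> ->]|[-> ->]]; case: (set2_eq hf) => [[-> ->]|[-> ->]];
  lia.
Qed.

Lemma core n (B : {set {set 'I_n}}) (a0 c c' x v : 'I_n) l h : blocks B ->
  l < cdist a0 x < h -> ~~ (l < cdist a0 c < h) ->
  (forall y, adj B x y -> y = v) -> ~~ (l < cdist a0 v < h) ->
  (forall y, adj B c y -> y = c') -> l < cdist a0 c' < h -> c' != x -> False.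
Proof.
move=> hB hx hc hxv hv hcc hc' c'x.
have [e [eB /imsetP[w]]] := hB _ (arc_T3 hx hc).
rewrite !inE => wc E; move: eB; rewrite {}E; case: ifP => wP eB.
- case/andP: (wP) => wx hw.
  have := hxv w; rewrite /adj eq_sym wx eB => /(_ isT) ev.
  by move: hv; rewrite -ev hw.
- have := hcc w; rewrite /adj eq_sym wc eB => /(_ isT) ew.
  by move: wP; rewrite ew c'x hc'.
Qed.

Lemma cdist_inj n (a u w : 'I_n) : cdist a u = cdist a w -> u = w.
Proof.
move=> E; apply: ord_inj; move: E; rewrite !cdistE.
have := ltn_ord a; have := ltn_ord u; have := ltn_ord w.
do 2 (case: ifP => ?); lia.
Qed.

Lemma cdist0 n (a : 'I_n) : cdist a a = 0.
Proof. by rewrite cdistE leqnn subnn. Qed.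

Lemma neq_nat n (u w : 'I_n) : u != w -> (u : nat) <> w.
Proof. by move=> /eqP h e; apply: h; apply: ord_inj. Qed.

Lemma main_half n (B : {set {set 'I_n}}) (a a' b' b x v : 'I_n) : blocks B ->
  (forall y, adj B a y -> y = a') -> (forall y, adj B b y -> y = b') ->
  (forall y, adj B x y -> y = v) -> adj B x v ->
  on_boundary a a' -> on_boundary b' b -> a' != b -> b' != a -> a != b ->
  a' \in hull_arc a b -> b' \in hull_arc a b -> x \notin hull_arc b a ->
  x != a' -> x != b' -> False.
Proof.
move=> hB ha hb hx hxv oa ob a'b b'a ab; rewrite !inE => ha' hb' hxa xa' xb'.
move/neq_nat: (a'b) => a'bN; move/neq_nat: (b'a) => b'aN; move/neq_nat: (ab) => abN.
have := ltn_ord a; have := ltn_ord a'; have := ltn_ord b; have := ltn_ord b';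
have := ltn_ord x => ltx ltb' ltb lta' lta.
have ra' : cdist a a' = 1.
  clear -oa ob ha' hb' hxa a'bN b'aN abN lta lta' ltb ltb' ltx; move: oa ha'; rewrite /on_boundary !cdistE; do 3 (case: ifP => ?); lia.
have rb' : cdist a b' + 1 = cdist a b.
  clear -oa ob ha' hb' hxa a'bN b'aN abN lta lta' ltb ltb' ltx; move: ob hb'; rewrite /on_boundary !cdistE; do 4 (case: ifP => ?); lia.
have rx : 0 < cdist a x < cdist a b.
  clear -oa ob ha' hb' hxa a'bN b'aN abN lta lta' ltb ltb' ltx; move: hxa; rewrite !cdistE; do 4 (case: ifP => ?); lia.
have xa'' : cdist a x != 1.
  by apply: contraNneq xa' => e; apply/eqP/(@cdist_inj _ a); rewrite e ra'.
have xb'' : cdist a x + 1 != cdist a b.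
  apply: contraNneq xb' => e; apply/eqP/(@cdist_inj _ a); clear -e rb'; lia.
have xv : x != v by case/andP: hxv.
have rv : cdist a x != cdist a v by apply: contraNneq xv => /cdist_inj ->.
case: (ltngtP (cdist a x) (cdist a v)) => hv.
- apply: (@core n B a a a' x v 0 (cdist a v)) => //; rewrite ?cdist0; try lia.
  by rewrite eq_sym.
- apply: (@core n B a b b' x v (cdist a v) (cdist a b)) => //; try lia.
  by rewrite eq_sym.
- by rewrite hv eqxx in rv.
Qed.

Lemma zipb (T : eqType) (q : seq T) u w : uniq q -> (u, w) \in zip q (behead q) ->
  [/\ u \in q, w \in q & index w q = (index u q).+1].
Proof.
elim: q => [|z q IH] //=. case: q IH => [|z' q'] IH //= /andP[zq uq].
rewrite in_cons => /orP[/eqP [-> ->]| h].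
- have zz : (z == z') = false.
    by apply/negbTE; apply: contraNneq zq => ->; rewrite inE eqxx.
  rewrite zz !eqxx; split => //; by rewrite !inE eqxx ?orbT.
- have [hu hw hi] := IH uq h.
  have zu : (z == u) = false by apply/negbTE; apply: contraNneq zq => ->.
  have zw : (z == w) = false by apply/negbTE; apply: contraNneq zq => ->.
  rewrite zu zw; split; first by rewrite hu orbT.
    by rewrite in_cons hw orbT.
  by move: hi => /= ->.
Qed.

Section Cat.
Variable n : nat.
Variable B : {set {set 'I_n}}.
Variable q : seq 'I_n.
Hypothesis uq : uniq q.
Hypothesis Sq : [set x in q] = internal B.
Hypothesis Hq : forall x y, x \in internal B -> y \in internal B ->
      (adj B x y <-> ((x, y) \in zip q (behead q)) || ((y, x) \in zip q (behead q))).

Lemma inq z : z \in internal B -> z \in q.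
Proof. by rewrite -Sq inE. Qed.

Lemma step u w : u \in internal B -> w \in internal B -> adj B u w ->
  index w q = (index u q).+1 \/ index u q = (index w q).+1.
Proof.
move=> hu hw /(Hq hu hw) /orP[/(zipb uq) [_ _ ->]|/(zipb uq) [_ _ ->]].
- by left.
- by right.
Qed.

Lemma idx_inj u w : u \in internal B -> w \in internal B -> index u q = index w q -> u = w.
Proof.
move=> /inq hu /inq hw E.
by rewrite -(nth_index u hu) -(nth_index u hw) E.
Qed.

Lemma mono_up cs c0 c1 : uniq [:: c0, c1 & cs] ->
  all (fun z => z \in internal B) [:: c0, c1 & cs] -> path (adj B) c0 (c1 :: cs) ->
  index c1 q = (index c0 q).+1 -> index (last c1 cs) q = index c0 q + (size cs).+1.
Proof.
elim: cs c0 c1 => [|c2 cs IH] c0 c1 /=; first by move=> _ _ _ ->; rewrite addn1.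
move=> /and3P[u0 u1 u2] /and4P[i0 i1 i2 i3] /and3P[_ a12 p2] e01.
have e12 : index c2 q = (index c1 q).+1.
  case: (step i1 i2 a12) => // e; exfalso.
  have := idx_inj i2 i0; rewrite e01 in e => /(_ (esym (succn_inj e))) e20.
  by move: u0; rewrite e20 !inE eqxx orbT.
rewrite (IH c1 c2) //=; lia.
Qed.

Lemma mono_down cs c0 c1 : uniq [:: c0, c1 & cs] ->
  all (fun z => z \in internal B) [:: c0, c1 & cs] -> path (adj B) c0 (c1 :: cs) ->
  index c0 q = (index c1 q).+1 -> index c0 q = index (last c1 cs) q + (size cs).+1.
Proof.
elim: cs c0 c1 => [|c2 cs IH] c0 c1 /=; first by move=> _ _ _ ->; rewrite addn1.
move=> /and3P[u0 u1 u2] /and4P[i0 i1 i2 i3] /and3P[_ a12 p2] e01.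
have e12 : index c1 q = (index c2 q).+1.
  case: (step i1 i2 a12) => // e; exfalso.
  have := idx_inj i2 i0; rewrite -e01 in e => /(_ e) e20.
  by move: u0; rewrite e20 !inE eqxx orbT.
have := IH c1 c2; rewrite /= u1 u2 i1 i2 i3 a12 p2 => /(_ isT isT isT e12).
rewrite e01 => ->; lia.
Qed.
End Cat.

Lemma adj_sym' n (B : {set {set 'I_n}}) u v : adj B u v = adj B v u.
Proof. by rewrite /adj eq_sym setUC. Qed.

Lemma int2 n (B : {set {set 'I_n}}) z u w : adj B z u -> adj B z w -> u != w ->
  z \in internal B.
Proof.
move=> hu hw uw; rewrite inE; apply/andP; split.
  by rewrite inE; apply/existsP; exists u.
have -> : 2 = #|[set u; w]| by rewrite cards2 uw.
by apply: subset_leq_card; apply/subsetP => y; rewrite !inE => /orP[]/eqP->.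
Qed.

Lemma path_interior n (B : {set {set 'I_n}}) x0 p : uniq (x0 :: p) -> path (adj B) x0 p ->
  forall z, z \in belast x0 p -> z != x0 -> z \in internal B.
Proof.
elim: p x0 => [|x1 p IH] x0 //= /andP[u0 u1] /andP[a01 pp] z.
rewrite in_cons => /orP[/eqP -> /eqP //|].
case: (eqVneq z x1) => [-> hz _|zx1 hz _]; last by apply: (IH x1).
case: p u0 u1 pp hz {IH} => [|x2 p] //= u0 /andP[u1 _] /andP[a12 _] _.
apply: (@int2 _ _ _ x0 x2) => //; first by rewrite adj_sym'.
by apply: contraNneq u0 => ->; rewrite !inE eqxx orbT.
Qed.

Lemma endpoint n (B : {set {set 'I_n}}) (a a' : 'I_n) t : caterpillar B ->
  spine B (a :: a' :: t) -> forall y, adj B a y -> y = a'.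
Proof.
move=> [_ [q [uq Sq Hq]]] [/andP[us ps] mx] y ay.
case: (eqVneq y a') => // ya'; exfalso.
have ya : y != a by move: ay; rewrite /adj eq_sym => /andP[].
case: (boolP (y \in a :: a' :: t)) => ys; last first.
  have hb : bpath B [:: y, a, a' & t].
    rewrite /bpath; apply/andP; split; first by rewrite cons_uniq ys us.
    by apply/andP; split; [rewrite adj_sym' | exact: ps].
  by have := mx _ hb; rewrite /=; lia.
have yt : y \in t by move: ys; rewrite !inE (negbTE ya) (negbTE ya').
clear mx ys; move: us ps; case/path.splitP: yt => t1 t2 us ps.
have uC : uniq [:: a, a' & rcons t1 y].
  by move: us; rewrite -cat_cons -cat_cons cat_uniq => /andP[].
have pC : path (adj B) a (a' :: rcons t1 y).
  by move: ps; rewrite -cat_cons cat_path => /andP[].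
have aint : a \in internal B.
  by apply: (@int2 _ _ _ a' y) => //; [case/andP: pC | rewrite eq_sym].
have py : adj B (last a' t1) y by move: pC => /= /andP[_]; rewrite rcons_path => /andP[].
have yint : y \in internal B.
  apply: (@int2 _ _ _ a (last a' t1)); first by rewrite adj_sym'.
    by rewrite adj_sym'.
  apply: contraTneq uC => ->; rewrite cons_uniq negb_and negbK; apply/orP; left.
  by rewrite -rcons_cons mem_rcons in_cons mem_last orbT.
have allC : all (fun z => z \in internal B) [:: a, a' & rcons t1 y].
  apply/allP => z; rewrite in_cons => /orP[/eqP -> //|hz].
  case: (eqVneq z y) => [-> //|zy].
  apply: (path_interior uC pC); last first.
    by apply: contraTneq uC => e; rewrite cons_uniq -e hz.
  rewrite /= belast_rcons in_cons; apply/orP; right.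
  move: hz; rewrite !in_cons mem_rcons in_cons (negbTE zy) /=.
  by [].
have a'int : a' \in internal B by move/allP: allC; apply; rewrite !inE eqxx orbT.
have aa' : adj B a a' by case/andP: pC.
case: (step uq Hq aint a'int aa') => e.
- have := mono_up uq Sq Hq uC allC pC e; rewrite last_rcons size_rcons => E1.
  by case: (step uq Hq aint yint ay) => E2; clear -E1 E2; lia.
- have := mono_down uq Sq Hq uC allC pC e; rewrite last_rcons size_rcons => E1.
  by case: (step uq Hq aint yint ay) => E2; clear -E1 E2; lia.
Qed.

Lemma bpath_rev n (B : {set {set 'I_n}}) p : bpath B p -> bpath B (rev p).
Proof.
case: p => [|x r] // /andP[u pp].
have E : rev (x :: r) = last x r :: rev (belast x r) by rewrite lastI rev_rcons.
rewrite E /bpath; apply/andP; split; first by rewrite -E rev_uniq.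
rewrite rev_path; move: pp; apply: sub_path => y z; by rewrite adj_sym'.
Qed.

Lemma spine_rev n (B : {set {set 'I_n}}) s : spine B s -> spine B (rev s).
Proof.
by move=> [hb mx]; split; [exact: bpath_rev | move=> p /mx; rewrite size_rev].
Qed.

Lemma second_nl n (B : {set {set 'I_n}}) u w z r v : bpath B [:: u, w, z & r] ->
  (forall y, adj B w y -> y = v) -> False.
Proof.
move=> /andP[/andP[uu _] /= /and3P[a1 a2 _]] h.
have e1 := h u; have e2 := h z.
rewrite adj_sym' a1 in e1; rewrite a2 in e2.
move: uu; rewrite (e1 isT) -(e2 isT) !inE eqxx orbT //.
Qed.

Lemma leaf_nb n (B : {set {set 'I_n}}) x : leaf B x ->
  exists v, adj B x v /\ forall y, adj B x y -> y = v.
Proof.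
move=> /cards1P [v E]; exists v; split.
- have : v \in [set y | adj B x y] by rewrite E set11.
  by rewrite inE.
- move=> y hy; have : y \in [set y | adj B x y] by rewrite inE.
  by rewrite E inE => /eqP.
Qed.

Lemma uniq_neq (T : eqType) (x y : T) l : uniq (x :: l) -> y \in l -> x != y.
Proof. by move=> /andP[h _] hy; apply: contraNneq h => ->. Qed.

Lemma second_nl2 n (B : {set {set 'I_n}}) u w t v : bpath B [:: u, w & t] ->
  t != [::] -> (forall y, adj B w y -> y = v) -> False.
Proof. by case: t => [|z r] // hb _; apply: second_nl hb. Qed.

Theorem claim1 (n : nat) (B : {set {set 'I_n}}) (a a' b' b : 'I_n)
    (m : seq 'I_n) (alpha beta : {set 'I_n}) :
  blocker B -> ~ is_star B -> caterpillar B ->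
  spine B ([:: a, a' & m] ++ [:: b'; b]) ->
  on_boundary a a' -> on_boundary b' b -> a' != b' ->
  (alpha = hull_arc a b /\ beta = hull_arc b a \/ alpha = hull_arc b a /\ beta = hull_arc a b) ->
  a' \in alpha -> b' \in alpha ->
  forall x, x \in verts B -> leaf B x -> x \in beta.
Proof.
move=> [_ hB _] _ cat sp oa ob a'b' hab ha' hb' x _ lx.
case: (boolP (x \in beta)) => // xb; exfalso.
have [v [xv hx]] := leaf_nb lx.
have rs : rev ([:: a, a' & m] ++ [:: b'; b]) = [:: b, b' & rev m ++ [:: a'; a]].
  by rewrite rev_cat (rev_cons a) (rev_cons a') -!cats1 -catA.
have sp2 := spine_rev sp; rewrite rs in sp2.
have ha := endpoint cat sp.
have hb := endpoint cat sp2.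
case: sp2 => /andP[us2 _] _.
have mr : forall z, z \in [:: a'; a] -> z \in rev m ++ [:: a'; a].
  by move=> z hz; rewrite mem_cat hz orbT.
have ab : a != b.
  rewrite eq_sym; apply: (uniq_neq us2); rewrite in_cons mr ?orbT //.
  by rewrite !inE eqxx orbT.
have a'b : a' != b.
  rewrite eq_sym; apply: (uniq_neq us2); rewrite in_cons mr ?orbT //.
  by rewrite !inE eqxx.
have b'a : b' != a.
  case/andP: us2 => _ us3; apply: (uniq_neq us3); rewrite mr //.
  by rewrite !inE eqxx orbT.
have xa' : x != a'.
  apply/negP => /eqP E; rewrite E in hx.
  case: sp => hbp _; apply: (second_nl2 hbp _ hx).
  by case: (m).
have xb' : x != b'.
  apply/negP => /eqP E; rewrite E in hx.
  have := spine_rev sp; rewrite rs; case => hbp _; apply: (second_nl2 hbp _ hx).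
  by case: (rev m).
move: ha' hb'; case: hab => [[-> E]|[-> E]] ha' hb'; rewrite E in xb.
- exact: (main_half hB ha hb hx xv oa ob a'b b'a ab ha' hb' xb xa' xb').
- have oa' : on_boundary a' a by rewrite /on_boundary orbC.
  have ob' : on_boundary b b' by rewrite /on_boundary orbC.
  apply: (main_half hB hb ha hx xv ob' oa' b'a a'b _ hb' ha' xb xb' xa').
  by rewrite eq_sym.
Qed.
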